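(* Let $d\in\mathbb N$ and let $(\mathrm{RN}_{n,M,Q})_{n,M,Q\in\mathbb Z}\subseteq\mathbb N_0$ satisfy for all $n,M,Q\in\mathbb N$ that $\mathrm{RN}_{0,M,Q}=0$ and $$\mathrm{RN}_{n,M,Q}\le dM^n+\sum_{l=0}^{n-1}\Big[QM^{n-l}\big(d+\mathrm{RN}_{l,M,Q}+\mathbb 1_{\mathbb N}(l)\,\mathrm{RN}_{l-1,M,Q}\big)\Big].$$ Then for all $N\in\mathbb N$, $\mathrm{RN}_{N,N,N}\le 8dN^{2N}$.
   Context: $\mathbb 1_{\mathbb N}(l)$ equals $1$ if $l\in\mathbb N=\{1,2,\dots\}$ and $0$ otherwise. *)

(* Defs.v *)
From mathcomp Require Import all_boot.
Set Implicit Arguments. Unset Strict Implicit. Unset Printing Implicit Defensive.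

Definition indN (l : nat) : nat := if 0 < l then 1 else 0.

(* Main.v *)
Require Import Defs.
From mathcomp Require Import all_boot.
From Stdlib Require Import Reals Lra Lia Psatz.

Module RealPart.
Local Open Scope R_scope.
Lemma exp_quarter : exp (1/4) <= 4/3.
Proof.
  assert (H : exp (1/4) ^ 4 = exp 1).
  { simpl. rewrite Rmult_1_r -!exp_plus. f_equal; lra. }
  pose proof exp_le_3. pose proof (exp_pos (1/4)).
  destruct (Rle_dec (exp (1/4)) (4/3)) as [|Hn]; auto.
  exfalso. assert (4/3 <= exp (1/4)) by lra.
  assert ((4/3)^4 <= exp (1/4) ^4) by (apply pow_incr; lra).
  simpl in *. lra.
Qed.
Lemma exp_powN (x : R) (N : nat) : exp x ^ N = exp (INR N * x).
Proof.
  induction N as [|N IH]; simpl. rewrite Rmult_0_l exp_0; lra.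
  rewrite IH -exp_plus. f_equal. destruct N; simpl; lra.
Qed.
Lemma key (N : nat) : le 4 N ->
  le (Nat.pow (Nat.add (Nat.add (Nat.mul N N) N) 1) N) (Nat.mul 4 (Nat.pow (Nat.mul N N) N)).
Proof.
  intros HN. apply INR_le.
  rewrite mult_INR !pow_INR !plus_INR !mult_INR. simpl (INR 1). 
  replace (INR 4) with 4 by (simpl; lra).
  assert (Hn : 4 <= INR N) by (replace 4 with (INR 4) by (simpl; lra); apply le_INR; lia).
  set (n := INR N) in *.
  set (x := (n+1)/(n*n)).
  assert (Hx : 0 < x) by (unfold x; apply Rdiv_lt_0_compat; nra).
  assert (E : n*n+n+1 = (n*n)*(1+x)) by (unfold x; field; lra).
  rewrite E Rpow_mult_distr.
  assert (B : (1+x)^N <= 4).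
  { apply Rle_trans with (exp x ^ N).
    - apply pow_incr. pose proof (exp_ineq1_le x). lra.
    - rewrite exp_powN. fold n.
      assert (Nx : n * x = 1 + 1/n) by (unfold x; field; lra).
      rewrite Nx.
      apply Rle_trans with (exp (1 + 1/4)).
      + destruct (Req_dec (1/n) (1/4)) as [e|e]. rewrite e; lra.
        left. apply exp_increasing. 
        assert (1/n <= 1/4) by (apply Rmult_le_reg_l with (4*n); [nra| field_simplify; lra]). lra.
      + rewrite exp_plus. pose proof exp_le_3. pose proof exp_quarter.
        pose proof (exp_pos 1). pose proof (exp_pos (1/4)). nra. }
  assert (0 < (n*n)^N) by (apply pow_lt; nra).
  nra.
Qed.
End RealPart.

From mathcomp Require Import all_boot zify.

Lemma expn_pow m n : m ^ n = Nat.pow m n.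
Proof. elim: n => [//|n IH]; by rewrite expnS IH -multE. Qed.

Lemma keyN (N : nat) : 0 < N -> (N*N+N+1)^N <= 4 * (N*N)^N.
Proof.
  move=> N0.
  case: (ltnP N 4) => HN.
  - case: N N0 HN => [//|[|[|[|]]]] //.
  - apply/leP. rewrite !expn_pow -!multE -!plusE. apply: RealPart.key. by apply/leP.
Qed.

Theorem lemma3p15 (d : nat) (RN : nat -> nat -> nat -> nat) :
  0 < d ->
  (forall M Q, 0 < M -> 0 < Q -> RN 0 M Q = 0) ->
  (forall n M Q, 0 < n -> 0 < M -> 0 < Q ->
     RN n M Q <= d * M ^ n +
       \sum_(0 <= l < n) Q * M ^ (n - l) * (d + RN l M Q + indN l * RN l.-1 M Q)) ->
  forall N, 0 < N -> RN N N N <= 8 * d * N ^ (2 * N).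
Proof.
  move=> d0 H0 Hrec N N0.
  set r := fun l => RN l N N.
  set T := fun n => d * N ^ n +
       \sum_(0 <= l < n) N * N ^ (n - l) * (d + r l + indN l * r l.-1).
  have r0 : r 0 = 0 by rewrite /r H0.
  have rT : forall n, r n <= T n.
    case=> [|n]; first by rewrite r0.
    exact: Hrec.
  have TS : forall n, T n.+1 = N * T n + N * N * (d + r n + indN n * r n.-1).
    move=> n; rewrite /T big_nat_recr //= subSnn expn1 mulnDr expnS mulnA.
    have -> : \sum_(0 <= i < n) N * N ^ (n.+1 - i) * (d + r i + indN i * r i.-1)
      = N * \sum_(0 <= l < n) N * N ^ (n - l) * (d + r l + indN l * r l.-1).
      rewrite big_distrr /=; apply: eq_big_nat => l /andP [_ Hl].
      rewrite subSn 1?ltnW // expnS; lia.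
    lia.
  have T0 : T 0 = d by rewrite /T big_nil expn0 muln1 addn0.
  set y := N * N + N + 1.
  have U : forall n, T n + d <= 2 * d * y ^ n /\ T n.+1 + d <= 2 * d * y ^ n.+1.
    elim=> [|n [IH1 IH2]].
      rewrite TS T0 r0 /indN /= expn0 expn1 /y. lia.
    split => //.
    rewrite TS.
    have Hr1 := rT n.+1. have Hr0 := rT n.
    have Hi : indN n.+1 * r n.+1.-1 <= T n by rewrite /indN /= mul1n.
    rewrite !expnS in IH2 *.
    set Y := y ^ n in IH1 IH2 *.
    have Hy : (N + N * N) * y + N * N <= y * y by rewrite /y; nia.
    nia.
  have HrT : RN N N N <= T N := rT N.
  have [HU _] := U N.
  have K := @keyN N N0.
  rewrite expnM.
  have -> : (N ^ 2) = N * N by rewrite expnS expn1.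
  move: K HU HrT; rewrite -/y; set A := y ^ N; set B := (N * N) ^ N; set C := T N.
  move=> K HU HrT.
  have K2 := leq_mul (leqnn (2 * d)) K.
  have E : 2 * d * (4 * B) = 8 * d * B by rewrite mulnCA !mulnA.
  rewrite E in K2.
  apply: leq_trans HrT _. apply: leq_trans K2.
  apply: leq_trans HU. exact: leq_addr.
Qed.
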